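(* Let $q = 2^m$ and let $C \subseteq \mathbb{F}_q^n$ be a linear code. Then $C$ is GI-reducible if and only if $C \cap C^\perp = \{0\}$ (with respect to the standard inner product).
   Context: Vectors are row vectors; $I$ and $J$ are the $n\times n$ identity and all-ones matrices. For symmetric $M$, a code $C$ is $M$-LCD if $GMG^T$ is nonsingular for a generator matrix $G$ of $C$, and then $\Pi_{C,M} := MG^T(GMG^T)^{-1}G$. Codes $C_1,C_2$ are permutation-equivalent ($C_1\cong C_2$) if $C_2 = C_1P$ for a permutation matrix $P$; matrices satisfy $A_1 \cong A_2$ if $A_2 = P^TA_1P$ for a permutation matrix $P$. A code $C$ is GI-reducible if there is a nondegenerate $M = aI + bJ$ ($a,b\in\mathbb{F}_q$, $a\neq0$, $a+nb\neq0$) such that every code $CP$ ($P$ a permutation matrix) is $M$-LCD and, for all $C_1, C_2 \in \{CP\}$, $C_1\cong C_2 \iff \Pi_{C_1,M}\cong\Pi_{C_2,M}$. *)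

(* Defs.v *)
From HB Require Import structures.
From mathcomp Require Import all_boot all_order all_algebra all_fingroup all_field.
Set Implicit Arguments. Unset Strict Implicit. Unset Printing Implicit Defensive.
Import GRing.Theory.
Local Open Scope ring_scope.

(* A linear code C <= F^n is represented by a square matrix whose row space
   (mxalgebra) is C.  Its generator matrix is row_base C (rows form a basis). *)
Section Codes.
Variables (F : fieldType) (n : nat).

Definition genmx (C : 'M[F]_n) : 'M[F]_(\rank C, n) := row_base C.

Definition is_LCD (M C : 'M[F]_n) : bool :=
  (genmx C *m M *m (genmx C)^T) \in unitmx.

Definition Pi (C M : 'M[F]_n) : 'M[F]_n :=
  M *m (genmx C)^T *m invmx (genmx C *m M *m (genmx C)^T) *m genmx C.

Definition code_perm (C : 'M[F]_n) (s : 'S_n) : 'M[F]_n := C *m perm_mx s.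

Definition code_equiv (C1 C2 : 'M[F]_n) : Prop :=
  exists s : 'S_n, (C2 == C1 *m perm_mx s)%MS.

Definition mx_equiv (A1 A2 : 'M[F]_n) : Prop :=
  exists s : 'S_n, A2 = (perm_mx s)^T *m A1 *m perm_mx s.

Definition Jmx : 'M[F]_n := const_mx 1.

Definition GI_reducible (C : 'M[F]_n) : Prop :=
  exists a b : F,
    [/\ a != 0, a + n%:R * b != 0 &
      let M := a%:M + b *: Jmx in
      (forall s : 'S_n, is_LCD M (code_perm C s)) /\
      (forall s1 s2 : 'S_n,
         code_equiv (code_perm C s1) (code_perm C s2) <->
         mx_equiv (Pi (code_perm C s1) M) (Pi (code_perm C s2) M))].

(* dual code w.r.t. the standard inner product <u,v> = u v^T:
   C^perp = { u | u *m C^T = 0 } = row space of kermx C^T *)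
Definition dual_code (C : 'M[F]_n) : 'M[F]_n := kermx C^T.

End Codes.

(* Main.v *)
Require Import Defs.
From HB Require Import structures.
From mathcomp Require Import all_boot all_order all_algebra all_fingroup all_field.
Local Open Scope ring_scope.
Import GRing.Theory.
Set Implicit Arguments. Unset Strict Implicit.

Definition hullz (F : fieldType) (n : nat) (D : 'M[F]_n) :=
  (D :&: dual_code D == (0 : 'M[F]_n))%MS.

Lemma hull0P (F : fieldType) (n : nat) (D : 'M[F]_n) :
  hullz D -> forall m (V : 'M[F]_(m, n)), (V <= D)%MS -> V *m D^T = 0 -> V = 0.
Proof.
move=> /eqmxP hD m V VD VK.
apply: (@submx0null _ _ n).
have : (V <= D :&: dual_code D)%MS.
  by rewrite sub_capmx VD; apply/sub_kermxP.
by move/submx_trans; apply; rewrite hD.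
Qed.

Lemma hull0I (F : fieldType) (n : nat) (D : 'M[F]_n) :
  (forall V : 'M[F]_n, (V <= D)%MS -> V *m D^T = 0 -> V = 0) -> hullz D.
Proof.
move=> H; rewrite /hullz.
have -> : (D :&: dual_code D)%MS = 0.
  apply: H; first exact: capmxSl.
  by apply/sub_kermxP; exact: capmxSr.
exact/eqmxP.
Qed.

Lemma permK (F : fieldType) (n : nat) (s : 'S_n) :
  perm_mx s *m (perm_mx s)^T = 1%:M :> 'M[F]_n.
Proof. by rewrite tr_perm_mx -perm_mxM mulgV perm_mx1. Qed.

Lemma permK' (F : fieldType) (n : nat) (s : 'S_n) :
  (perm_mx s)^T *m perm_mx s = 1%:M :> 'M[F]_n.
Proof. by rewrite tr_perm_mx -perm_mxM mulVg perm_mx1. Qed.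

Lemma hull_perm (F : fieldType) (n : nat) (D : 'M[F]_n) (s : 'S_n) :
  hullz D -> hullz (D *m perm_mx s).
Proof.
move=> hD; apply: hull0I => V VD VK.
have W0 : V *m (perm_mx s)^T = 0.
  apply: (hull0P hD).
    case/submxP: VD => X ->.
    by rewrite -!mulmxA permK mulmx1 submxMl.
  by rewrite -mulmxA -trmx_mul.
by rewrite -[V]mulmx1 -(permK' F s) mulmxA W0 mul0mx.
Qed.

Lemma unit_gen (F : fieldType) (n : nat) (D : 'M[F]_n) :
  hullz D -> row_base D *m (row_base D)^T \in unitmx.
Proof.
move=> hD; rewrite -row_free_unit; apply: inj_row_free => v Hv.
have GD : (row_base D <= D)%MS by rewrite eq_row_base.
have DG : (D <= row_base D)%MS by rewrite eq_row_base.
have : v *m row_base D = 0.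
  apply: (hull0P hD); first exact: submx_trans (submxMl _ _) GD.
  case/submxP: DG => Y DY.
  have -> : D^T = (row_base D)^T *m Y^T by rewrite {1}DY trmx_mul.
  by rewrite mulmxA -(mulmxA v) Hv mul0mx.
move=> H; apply: (row_free_inj (row_base_free D)).
by rewrite /= H mul0mx.
Qed.

Definition PiI (F : fieldType) (n : nat) (D : 'M[F]_n) : 'M[F]_n :=
  (row_base D)^T *m invmx (row_base D *m (row_base D)^T) *m row_base D.

Definition charP (F : fieldType) (n : nat) (D X : 'M[F]_n) :=
  [/\ (X <= D)%MS, D *m X = D & X^T = X].

Lemma PiG_sym (F : fieldType) (k n : nat) (G : 'M[F]_(k, n)) :
  (G^T *m invmx (G *m G^T) *m G)^T = G^T *m invmx (G *m G^T) *m G.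
Proof. by rewrite !trmx_mul trmxK trmx_inv trmx_mul trmxK mulmxA. Qed.

Lemma PiG_id (F : fieldType) (k n : nat) (G : 'M[F]_(k, n)) :
  G *m G^T \in unitmx -> G *m (G^T *m invmx (G *m G^T) *m G) = G.
Proof. by move=> U; rewrite !mulmxA mulmxV // mul1mx. Qed.

Lemma PiI_char (F : fieldType) (n : nat) (D : 'M[F]_n) :
  hullz D -> charP D (PiI D).
Proof.
move=> hD; have U := unit_gen hD.
have GD : (row_base D <= D)%MS by rewrite eq_row_base.
have DG : (D <= row_base D)%MS by rewrite eq_row_base.
split.
- exact: submx_trans (submxMl _ _) GD.
- case/submxP: DG => Y DY.
  rewrite {1}DY /PiI -mulmxA PiG_id //.
- exact: PiG_sym.
Qed.

Lemma char_uniq (F : fieldType) (n : nat) (D X Y : 'M[F]_n) :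
  hullz D -> charP D X -> charP D Y -> X = Y.
Proof.
move=> hD [X1 X2 X3] [Y1 Y2 Y3].
apply/eqP; rewrite -subr_eq0; apply/eqP.
apply: (hull0P hD).
  by rewrite addmx_sub // eqmx_opp.
have : D *m (X - Y) = 0 by rewrite mulmxBr X2 Y2 subrr.
move/(congr1 trmx); rewrite trmx_mul linearB /= X3 Y3 => ->.
by rewrite trmx0.
Qed.

Lemma char_perm (F : fieldType) (n : nat) (D X : 'M[F]_n) (s : 'S_n) :
  charP D X -> charP (D *m perm_mx s) ((perm_mx s)^T *m X *m perm_mx s).
Proof.
move=> [X1 X2 X3]; split.
- by apply: submxMr; exact: submx_trans (submxMl _ _) X1.
- by rewrite !mulmxA -(mulmxA D) permK mulmx1 X2.
- by rewrite !trmx_mul trmxK X3 mulmxA.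
Qed.

Lemma char_eqmx (F : fieldType) (n : nat) (D1 D2 X : 'M[F]_n) :
  (D1 == D2)%MS -> charP D1 X -> charP D2 X.
Proof.
move=> /eqmxP E [X1 X2 X3]; split => //.
- by rewrite -E.
- have : (D2 <= D1)%MS by rewrite E.
  by case/submxP => Y ->; rewrite -mulmxA X2.
Qed.

Lemma char_row (F : fieldType) (n : nat) (D X : 'M[F]_n) :
  charP D X -> (X == D)%MS.
Proof.
move=> [X1 X2 X3]; apply/andP; split => //.
by rewrite -X2 submxMl.
Qed.

Lemma eqmx0 (F : fieldType) (n : nat) (X : 'M[F]_n) :
  (X == (0 : 'M[F]_n))%MS = (X == 0).
Proof. by rewrite sub0mx andbT submx0. Qed.

Lemma sum_sq0 (F : fieldType) (ch : 2 \in [pchar F])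
  (n : nat) (h : 'rV[F]_n) : h *m h^T = 0 -> forall i, \sum_k h i k = 0.
Proof.
move=> H i; rewrite [i]ord1.
have : (\sum_k h 0 k) ^+ 2 = 0.
  rewrite -(pFrobenius_autE ch) rmorph_sum /=.
  have H0 : \sum_k h 0 k * h 0 k = 0.
    have E := congr1 (fun A : 'M_1 => A 0 0) H; rewrite /= !mxE in E.
    rewrite -[RHS]E; apply: eq_bigr => k _; by rewrite mxE.
  rewrite -[RHS]H0; apply: eq_bigr => k _; by rewrite pFrobenius_autE expr2.
by move/eqP; rewrite expf_eq0 /= => /eqP.
Qed.

Theorem mainTheorem5 (F : finFieldType) (m : nat) (hq : #|F| = (2 ^ m)%N)
  (n : nat) (C : 'M[F]_n) :
  GI_reducible C <-> (C :&: dual_code C == (0 : 'M[F]_n))%MS.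
Proof.
split.
- have ch : 2 \in [pchar F] by apply: card_finPcharP hq _.
  case=> a [b [ha hab [LCD _]]].
  have := LCD 1%g; rewrite /is_LCD /Defs.genmx /code_perm perm_mx1 mulmx1.
  set G := row_base C; set M := _ + _ => U.
  rewrite eqmx0; apply: contraT => /rowV0Pn [h hin hnz].
  have hC : (h <= C)%MS by apply: submx_trans hin (capmxSl _ _).
  have hK : h *m C^T = 0 by apply/sub_kermxP; apply: submx_trans hin (capmxSr _ _).
  have GC : (G <= C)%MS by rewrite /G eq_row_base.
  have CG : (C <= G)%MS by rewrite /G eq_row_base.
  clearbody G.
  case/submxP: (submx_trans hC CG) => u hu.
  have hG : h *m G^T = 0.
    case/submxP: GC => Z ->; by rewrite trmx_mul mulmxA hK mul0mx.
  have hh : h *m h^T = 0.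
    case/submxP: hC => Z hZ; by rewrite {2}hZ trmx_mul mulmxA hK mul0mx.
  have hJ : h *m Jmx F n = 0.
    apply/matrixP => i j; rewrite !mxE.
    rewrite (eq_bigr (fun k => h i k)); last by move=> k _; rewrite !mxE mulr1.
    have E := sum_sq0 ch hh i; exact E.
  have : u *m (G *m M *m G^T) = 0.
    rewrite !mulmxA -hu /M mulmxDr mul_mx_scalar -scalemxAr hJ scaler0 addr0.
    by rewrite -scalemxAl hG scaler0.
  move/(congr1 (mulmx^~ (invmx (G *m M *m G^T)))); rewrite /= mulmxK // mul0mx => u0.
  by move: hnz; rewrite hu u0 mul0mx eqxx.
- move=> hC; exists 1, 0; split; first exact: oner_neq0.
    by rewrite mulr0 addr0 oner_neq0.
  cbv zeta; rewrite scale0r addr0.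
  have hP : forall s, hullz (code_perm C s) by move=> s; apply: hull_perm.
  have PiE : forall s, Pi (code_perm C s) 1%:M = PiI (code_perm C s).
    by move=> s; rewrite /Pi mul1mx mulmx1.
  split.
    by move=> s; rewrite /is_LCD mulmx1; apply: unit_gen.
  move=> s1 s2; rewrite !PiE; split.
  + case=> s E; exists s.
    apply: (char_uniq (hP s2) (PiI_char (hP s2))).
    apply: char_eqmx (char_perm s (PiI_char (hP s1))).
    by apply/eqmxP; apply: eqmx_sym; apply/eqmxP.
  + case=> s E; exists s.
    have E2 := char_row (PiI_char (hP s2)).
    have E1 := char_row (char_perm s (PiI_char (hP s1))).
    rewrite -E in E1.
    apply/eqmxP; apply: eqmx_trans (eqmx_sym (eqmxP E2)) _.
    exact/eqmxP.
Qed.
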